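(* If a graph $G$ on $[n]$ is geometrically copious, then every vertex of $G$ has degree at least three.
   Context: Setup. $G\subseteq\binom{[n]}{2}$ is a simple graph on $[n]$, with $n\ge4$, and $G_i$ is the set of neighbours of $i$. The kinematic space $\mathcal K_G\subseteq\mathbb P^{|G|-1}$ is cut out by $\sum_{j\in G_i}s_{ij}=0$ for $i\in[n]$. $\mathcal H$ is the braid arrangement $\bigcup_{i<j}\{x_i=x_j\}$. Scattering correspondence. $$\mathcal V_G=\{(s,x)\in\mathbb P^{|G|-1}\times(\mathbb P^{n-1}\setminus\mathcal H): s\in\mathcal K_G,\ \textstyle\sum_{j\in G_i}s_{ij}/(x_i-x_j)=0\ \forall i\}.$$ Solutions in $x$ come in $\mathrm{PGL}(2)$-orbits, where $\mathrm{PGL}(2)$ acts by $x_i\mapsto(ax_i+b)/(cx_i+d)$. Each orbit corresponds to a point of the moduli space $\mathcal M_{0,n}$ of $n$ distinct points on $\mathbb P^1$, giving projections $\mathcal K_G\leftarrow\mathcal V_G\to\mathcal M_{0,n}$. Geometrically copious. $G$ is geometrically copious if $\mathcal V_G\to\mathcal M_{0,n}$ is dominant and the fiber of $\mathcal V_G\to\mathcal K_G$ over a generic point of $\mathcal K_G$ has dimension two in $\mathbb P^{n-1}$ (i.e. modulo $\mathrm{PGL}(2)$ this map is finite-to-one). *)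

(* Defs.v *)
From HB Require Import structures.
From mathcomp Require Import all_boot all_order all_algebra.
From mathcomp Require Import mpoly.
Set Implicit Arguments. Unset Strict Implicit. Unset Printing Implicit Defensive.
Import Order.TTheory GRing.Theory.
Local Open Scope ring_scope.

Definition simple_graph (n : nat) (G : {set {set 'I_n}}) : Prop :=
  forall e, e \in G -> #|e| = 2%N.

Definition nbhd (n : nat) (G : {set {set 'I_n}}) (i : 'I_n) : {set 'I_n} :=
  [set j | [set i; j] \in G].
Definition degree (n : nat) (G : {set {set 'I_n}}) (i : 'I_n) : nat := #|nbhd G i|.

(* A Mandelstam vector s in C^{G} is stored as an n x n matrix with s i j = s j i
   = s_{ij} for {i,j} in G and 0 off the edges (a linear embedding of C^{|G|}).
   in_KG: s lies in (the affine cone over) the kinematic space K_G. *)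
Definition in_KG (C : fieldType) (n : nat) (G : {set {set 'I_n}}) (s : 'M[C]_n) : Prop :=
  [/\ forall i j, s i j = s j i,
      forall i j, [set i; j] \notin G -> s i j = 0
    & forall i, \sum_(j in nbhd G i) s i j = 0].

Definition svec (C : fieldType) (n : nat) (s : 'M[C]_n) : 'I_(n * n) -> C :=
  fun k => mxvec s 0 k.

Definition distinct_coords (C : fieldType) (n : nat) (x : 'I_n -> C) : Prop :=
  forall i j, i != j -> x i != x j.

Definition scattering (C : fieldType) (n : nat) (G : {set {set 'I_n}})
    (s : 'M[C]_n) (x : 'I_n -> C) : Prop :=
  forall i, \sum_(j in nbhd G i) s i j / (x i - x j) = 0.

(* Fiber of V_G -> K_G over s, as a subset of the affine cone C^n over P^{n-1} \ H *)
Definition fiber (C : fieldType) (n : nat) (G : {set {set 'I_n}}) (s : 'M[C]_n)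
    (x : 'I_n -> C) : Prop :=
  distinct_coords x /\ scattering G s x.

(* Projection of V_G to the x-coordinates (affine cone over its image in P^{n-1} \ H) *)
Definition Vx (C : fieldType) (n : nat) (G : {set {set 'I_n}}) (x : 'I_n -> C) : Prop :=
  exists s : 'M[C]_n, [/\ in_KG G s, s != 0 & fiber G s x].

Definition vars_in (C : fieldType) (n : nat) (p : {mpoly C[n]}) (I : {set 'I_n}) : Prop :=
  forall m : 'X_{1..n}, m \in msupp p -> forall i, i \notin I -> m i = 0%N.

Definition alg_indep_on (C : fieldType) (n : nat) (S : ('I_n -> C) -> Prop)
    (I : {set 'I_n}) : Prop :=
  forall p : {mpoly C[n]}, vars_in p I -> (forall x, S x -> p.@[x] = 0) -> p = 0.

(* dimension of (the Zariski closure of) S in affine n-space is d: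
   the maximal number of coordinate functions algebraically independent on S
   (transcendence degree of the function field). *)
Definition affine_dim (C : fieldType) (n : nat) (S : ('I_n -> C) -> Prop) (d : nat) : Prop :=
  (exists I : {set 'I_n}, #|I| = d /\ alg_indep_on S I) /\
  (forall I : {set 'I_n}, alg_indep_on S I -> (#|I| <= d)%N).

(* dimension of a projective set, given via its affine cone S (a cone minus 0):
   projective dimension d  <->  affine cone dimension d+1 *)
Definition proj_dim (C : fieldType) (n : nat) (S : ('I_n -> C) -> Prop) (d : nat) : Prop :=
  affine_dim S d.+1.

Definition zariski_dense (C : fieldType) (n : nat) (S : ('I_n -> C) -> Prop) : Prop :=
  forall p : {mpoly C[n]}, (forall x, S x -> p.@[x] = 0) -> p = 0.

(* The image of V_G in M_{0,n} is dense iff its preimage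
   under the (open, surjective) quotient map from the configuration space
   {x in C^n : distinct coords} is dense; that preimage is exactly Vx G
   (the scattering equations for s in K_G are PGL(2)-covariant), and the
   configuration space is dense open in C^n. *)
Definition dominant_to_M0n (C : fieldType) (n : nat) (G : {set {set 'I_n}}) : Prop :=
  zariski_dense (@Vx C n G).

(* The fiber of V_G -> K_G over a generic point of K_G has dimension two in P^{n-1}:
   there is a nonempty Zariski-open subset {q != 0} of (projective) K_G on which it holds. *)
Definition generic_fiber_dim2 (C : fieldType) (n : nat) (G : {set {set 'I_n}}) : Prop :=
  exists q : {mpoly C[n * n]},
    (exists s0 : 'M[C]_n, [/\ in_KG G s0, s0 != 0 & q.@[svec s0] != 0]) /\
    (forall s : 'M[C]_n, in_KG G s -> s != 0 -> q.@[svec s] != 0 ->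
       proj_dim (fiber G s) 2).

Definition geometrically_copious (C : fieldType) (n : nat) (G : {set {set 'I_n}}) : Prop :=
  dominant_to_M0n C G /\ generic_fiber_dim2 C G.

(* Main.v *)
Require Import Defs.
From HB Require Import structures.
From mathcomp Require Import all_boot all_order all_algebra.
From mathcomp Require Import mpoly.
From mathcomp Require Import ring.
Set Implicit Arguments. Unset Strict Implicit. Unset Printing Implicit Defensive.
Import Order.TTheory GRing.Theory.
Local Open Scope ring_scope.
From Stdlib Require Import Classical.
Section Zero.
Variable C : fieldType.
Hypothesis hC : [pchar C]%R =i pred0.

Lemma polyU (q : {poly C}) : (forall c, q.[c] = 0) -> q = 0.
Proof.
move=> H; apply: (@roots_geq_poly_eq0 _ q [seq k%:R | k <- iota 0 (size q)]).
- by apply/allP => x /mapP [k _ ->]; apply/rootP; apply: H.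
- rewrite map_inj_uniq ?iota_uniq // => a b /eqP.
  have := pcharf0P C; case => h _; move: (h hC) => {}h.
  case: (ltngtP a b) => // ab.
  + by rewrite -(subnK (ltnW ab)) natrD eq_sym -subr_eq0 addrK h subn_eq0 leqNgt ab.
  + by rewrite -(subnK (ltnW ab)) natrD -subr_eq0 addrK h subn_eq0 leqNgt ab.
- by rewrite size_map size_iota.
Qed.
End Zero.
Lemma meval_muni (C : fieldType) n (p : {mpoly C[n.+1]}) (v : 'I_n.+1 -> C) :
  p.@[v] = (map_poly (meval (fun j : 'I_n => v (widen_ord (leqnSn n) j))) (muni p)).[v ord_max].
Proof.
rewrite mevalE muniE rmorph_sum horner_sum; apply: eq_bigr => m _.
rewrite -!mul_polyC !rmorphM /= !map_polyC map_polyXn !hornerE /=.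
rewrite mevalZ mevalX big_ord_recr /= mulrA; congr (_ * _ * _).
by apply: eq_bigr => i _; rewrite mnmE.
Qed.

Lemma mnm_split n (m m' : 'X_{1..n.+1}) :
  (([multinom m' (widen_ord (leqnSn n) i) | i < n] == [multinom m (widen_ord (leqnSn n) i) | i < n])
   && (m' ord_max == m ord_max)) = (m' == m).
Proof.
apply/idP/eqP => [/andP [/eqP h1 /eqP h2] | ->]; last by rewrite !eqxx.
apply/mnmP => i; case: (unliftP ord_max i) => [j ->|->] //.
have -> : lift ord_max j = widen_ord (leqnSn n) j by apply: val_inj; rewrite /= /bump leqNgt ltn_ord.
by move/mnmP: h1 => /(_ j); rewrite !mnmE.
Qed.

Lemma muni_coef (C : fieldType) n (p : {mpoly C[n.+1]}) m :
  p@_m = ((muni p)`_(m ord_max))@_[multinom m (widen_ord (leqnSn n) i) | i < n].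
Proof.
rewrite {1}[p]mpolyE muniE !raddf_sum /= coef_sum raddf_sum /=.
apply: eq_bigr => m' _.
rewrite mcoeffZ mcoeffX.
rewrite coefZ coefXn mulr_natr mcoeffMn mcoeffZ mcoeffX -mnm_split.
rewrite [m ord_max == _]eq_sym; case: (_ == _); case: (_ == _); by rewrite /= ?mulr0 ?mulr1.
Qed.

Lemma muni_inj (C : fieldType) n (p : {mpoly C[n.+1]}) : muni p = 0 -> p = 0.
Proof.
move=> h; apply/mpolyP => m; rewrite muni_coef h coef0 !mcoeff0 //.
Qed.

Lemma mpoly_zero (C : fieldType) (hC : [pchar C]%R =i pred0) n (p : {mpoly C[n]}) :
  (forall v, p.@[v] = 0) -> p = 0.
Proof.
elim: n p => [|n IH] p H.
  have E : forall m : 'X_{1..0}, m = 0%MM by move=> m; apply/mnmP => -[].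
  rewrite [p]mpolyE (eq_bigr (fun m => p@_m *: 1)); last first.
    by move=> m _; rewrite (E m) mpolyX0.
  rewrite -scaler_suml; have := H (fun _ => 0); rewrite mevalE.
  rewrite (eq_bigr (fun m => p@_m)) => [->|m _]; first by rewrite scale0r.
  by rewrite big_ord0 mulr1.
apply: muni_inj; apply/polyP => k; rewrite coef0; apply: IH => v'.
have Q0 : map_poly (meval v') (muni p) = 0.
  apply: (polyU hC) => c.
  pose v := fun i : 'I_n.+1 => if insub (val i) is Some j then v' j else c.
  have := H v; rewrite meval_muni.
  have -> : v ord_max = c by rewrite /v insubF //= ltnn.
  rewrite (@eq_map_poly _ _ _ (meval v')) // => q; apply: meval_eq => j.
  by rewrite /v /= valK.
by have := congr1 (fun q : {poly C} => q`_k) Q0; rewrite coef_map coef0.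
Qed.
Lemma mob_diff (C : fieldType) (al be ga de xa xb : C) :
  ga * xa + de != 0 -> ga * xb + de != 0 ->
  (al * xa + be) / (ga * xa + de) - (al * xb + be) / (ga * xb + de) =
  (al * de - be * ga) * (xa - xb) / ((ga * xa + de) * (ga * xb + de)).
Proof. by move=> ha hb; field; rewrite ha hb. Qed.

Lemma mob_term (C : fieldType) (al be ga de xa xb s : C) :
  ga * xa + de != 0 -> ga * xb + de != 0 -> al * de - be * ga != 0 -> xa - xb != 0 ->
  s / ((al * xa + be) / (ga * xa + de) - (al * xb + be) / (ga * xb + de)) =
  (ga * xa + de) ^+ 2 / (al * de - be * ga) * (s / (xa - xb))
  - (ga * xa + de) * ga / (al * de - be * ga) * s.
Proof.
move=> ha hb hD hx; rewrite mob_diff //.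
by field; rewrite hD hx hb ha.
Qed.

Lemma nbhd_neq n (G : {set {set 'I_n}}) a b :
  simple_graph G -> b \in nbhd G a -> b != a.
Proof.
move=> hG; rewrite inE; apply: contraTneq => ->; apply/negP => /hG.
by rewrite setUid cards1.
Qed.

Lemma mobius_fiber (C : fieldType) n (G : {set {set 'I_n}}) (s : 'M[C]_n)
    (x0 : 'I_n -> C) i (al be ga de t : C) :
  simple_graph G -> in_KG G s -> (forall b, s i b = 0) -> fiber G s x0 ->
  al * de - be * ga != 0 -> (forall m, ga * x0 m + de != 0) ->
  (forall m, m != i -> t * (ga * x0 m + de) - (al * x0 m + be) != 0) ->
  fiber G s (fun m => if m == i then t else (al * x0 m + be) / (ga * x0 m + de)).
Proof.
move=> hG [hsym hoff hsum] hrow [hdist hsc] hD hden ht.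
have hdiff : forall a b, a != b -> x0 a - x0 b != 0.
  by move=> a b /hdist; rewrite subr_eq0.
split.
- move=> a b ab /=.
  case: (eqVneq a i) => [ai | ai]; case: (eqVneq b i) => [bi | bi].
  + by move: ab; rewrite ai bi eqxx.
  + apply/eqP => E; move: (ht b bi); rewrite E.
    by rewrite divfK ?subrr ?eqxx // hden.
  + apply/eqP => E; move: (ht a ai); rewrite -E.
    by rewrite divfK ?subrr ?eqxx // hden.
  + rewrite -subr_eq0 mob_diff ?hden // mulf_eq0 invr_eq0 !mulf_eq0 negb_or.
    by rewrite (negbTE hD) (negbTE (hdiff a b ab)) !(negbTE (hden _)).
- move=> a.
  pose da := ga * x0 a + de; pose D := al * de - be * ga.
  rewrite (eq_bigr (fun b => da ^+ 2 / D * (s a b / (x0 a - x0 b)) - da * ga / D * s a b)).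
    by rewrite big_split /= sumrN -!mulr_sumr (hsc a) hsum !mulr0 subrr.
  move=> b hb; have ba := nbhd_neq hG hb.
  case: (eqVneq a i) => [ai | ai].
    by rewrite ai hrow !mul0r !mulr0 subrr.
  case: (eqVneq b i) => [bi | bi].
    by rewrite bi hsym hrow !mul0r !mulr0 subrr.
  by rewrite mob_term ?hden // hdiff // eq_sym.
Qed.
Definition mAl (R : comRingType) (a1 a2 a3 u1 u2 u3 : R) :=
  (u2-u3)*u1*(a2-a1) - (u2-u1)*u3*(a2-a3).
Definition mBe (R : comRingType) (a1 a2 a3 u1 u2 u3 : R) :=
  (u2-u1)*u3*(a2-a3)*a1 - (u2-u3)*u1*(a2-a1)*a3.
Definition mGa (R : comRingType) (a1 a2 a3 u1 u2 u3 : R) :=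
  (u2-u3)*(a2-a1) - (u2-u1)*(a2-a3).
Definition mDe (R : comRingType) (a1 a2 a3 u1 u2 u3 : R) :=
  (u2-u1)*(a2-a3)*a1 - (u2-u3)*(a2-a1)*a3.

Lemma mob_j (R : comRingType) (a1 a2 a3 u1 u2 u3 : R) :
  mAl a1 a2 a3 u1 u2 u3 * a1 + mBe a1 a2 a3 u1 u2 u3 =
  u1 * (mGa a1 a2 a3 u1 u2 u3 * a1 + mDe a1 a2 a3 u1 u2 u3).
Proof. rewrite /mAl /mBe /mGa /mDe; ring. Qed.
Lemma mob_k (R : comRingType) (a1 a2 a3 u1 u2 u3 : R) :
  mAl a1 a2 a3 u1 u2 u3 * a2 + mBe a1 a2 a3 u1 u2 u3 =
  u2 * (mGa a1 a2 a3 u1 u2 u3 * a2 + mDe a1 a2 a3 u1 u2 u3).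
Proof. rewrite /mAl /mBe /mGa /mDe; ring. Qed.
Lemma mob_l (R : comRingType) (a1 a2 a3 u1 u2 u3 : R) :
  mAl a1 a2 a3 u1 u2 u3 * a3 + mBe a1 a2 a3 u1 u2 u3 =
  u3 * (mGa a1 a2 a3 u1 u2 u3 * a3 + mDe a1 a2 a3 u1 u2 u3).
Proof. rewrite /mAl /mBe /mGa /mDe; ring. Qed.
Lemma mob_id (R : comRingType) (a1 a2 a3 : R) :
  let D := (a2-a3)*(a2-a1)*(a1-a3) in
  [/\ mAl a1 a2 a3 a1 a2 a3 = D, mBe a1 a2 a3 a1 a2 a3 = 0,
      mGa a1 a2 a3 a1 a2 a3 = 0 & mDe a1 a2 a3 a1 a2 a3 = D].
Proof. by rewrite /mAl /mBe /mGa /mDe; split; ring. Qed.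

Section Morph.
Variables (R S : comRingType) (f : {rmorphism R -> S}) (a1 a2 a3 u1 u2 u3 : R).
Lemma mAlM : f (mAl a1 a2 a3 u1 u2 u3) = mAl (f a1) (f a2) (f a3) (f u1) (f u2) (f u3).
Proof. by rewrite /mAl !(rmorphB, rmorphM). Qed.
Lemma mBeM : f (mBe a1 a2 a3 u1 u2 u3) = mBe (f a1) (f a2) (f a3) (f u1) (f u2) (f u3).
Proof. by rewrite /mBe !(rmorphB, rmorphM). Qed.
Lemma mGaM : f (mGa a1 a2 a3 u1 u2 u3) = mGa (f a1) (f a2) (f a3) (f u1) (f u2) (f u3).
Proof. by rewrite /mGa !(rmorphB, rmorphM). Qed.
Lemma mDeM : f (mDe a1 a2 a3 u1 u2 u3) = mDe (f a1) (f a2) (f a3) (f u1) (f u2) (f u3).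
Proof. by rewrite /mDe !(rmorphB, rmorphM). Qed.
End Morph.

Lemma meval_vars (C : fieldType) n (p : {mpoly C[n]}) (I : {set 'I_n}) v y :
  vars_in p I -> (forall i, i \in I -> v i = y i) -> p.@[v] = p.@[y].
Proof.
move=> hp hvy; rewrite !mevalE; apply: eq_big_seq => m hm; congr (_ * _).
apply: eq_bigr => i _; case: (boolP (i \in I)) => hi; first by rewrite hvy.
by rewrite (hp m hm i hi) !expr0.
Qed.

Definition hfun (R : comRingType) n (x : 'I_n -> R) (i : 'I_n) (a1 a2 a3 u1 u2 u3 w : R) :=
  let al := mAl a1 a2 a3 u1 u2 u3 in let be := mBe a1 a2 a3 u1 u2 u3 in
  let ga := mGa a1 a2 a3 u1 u2 u3 in let de := mDe a1 a2 a3 u1 u2 u3 in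
  (al * de - be * ga) * (\prod_m (ga * x m + de)) *
  \prod_(m | m != i) (w * (ga * x m + de) - (al * x m + be)).

Lemma hfunM (R S : comRingType) (f : {rmorphism R -> S}) n (x : 'I_n -> R) i a1 a2 a3 u1 u2 u3 w :
  f (hfun x i a1 a2 a3 u1 u2 u3 w) =
  hfun (fun m => f (x m)) i (f a1) (f a2) (f a3) (f u1) (f u2) (f u3) (f w).
Proof.
rewrite /hfun /mAl /mBe /mGa /mDe !(rmorphB, rmorphM, rmorph_prod) /=.
by congr (_ * _ * _); apply: eq_bigr => m _; rewrite !(rmorphB, rmorphM, rmorphD).
Qed.

Lemma hfun_ext (R : comRingType) n (x x' : 'I_n -> R) i a1 a2 a3 u1 u2 u3 w :
  x =1 x' -> hfun x i a1 a2 a3 u1 u2 u3 w = hfun x' i a1 a2 a3 u1 u2 u3 w.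
Proof.
move=> e; rewrite /hfun; congr (_ * _ * _); apply: eq_bigr => m _; by rewrite e.
Qed.

Lemma indep (C : fieldType) (hC : [pchar C]%R =i pred0) n (G : {set {set 'I_n}})
    (s : 'M[C]_n) x0 (i j k l : 'I_n) :
  simple_graph G -> in_KG G s -> (forall b, s i b = 0) -> fiber G s x0 ->
  j != i -> k != i -> l != i -> j != k -> j != l -> k != l ->
  alg_indep_on (fiber G s) [set i; j; k; l].
Proof.
move=> hG hs hrow hx0 ji ki li jk jl kl p hp hvan.
have [hdist _] := hx0.
pose h : {mpoly C[n]} := hfun (fun m => (x0 m)%:MP) i (x0 j)%:MP (x0 k)%:MP (x0 l)%:MP
   'X_j 'X_k 'X_l 'X_i.
have hev : forall v, h.@[v] = hfun x0 i (x0 j) (x0 k) (x0 l) (v j) (v k) (v l) (v i).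
  move=> v; rewrite /h hfunM /= !mevalC !mevalXU; apply: hfun_ext => m.
  by rewrite mevalC.
have [t0 ht0] : exists t0, forall m, m != i -> t0 != x0 m.
  pose q := \prod_(m | m != i) ('X - (x0 m)%:P).
  have qn0 : q != 0 by apply: monic_neq0; apply: monic_prod_XsubC.
  apply: NNPP => hne; move/eqP: qn0; apply; apply: (polyU hC) => c.
  case: (eqVneq (q.[c]) 0) => // hc; exfalso; apply: hne; exists c => m hm.
  move: hc; rewrite /q horner_prod => /prodf_neq0 /(_ m hm).
  by rewrite hornerXsubC subr_eq0.
have hd : forall a b, a != b -> x0 a - x0 b != 0.
  by move=> a b /hdist; rewrite subr_eq0.
pose vs := fun m => if m == i then t0 else x0 m.
have hh0 : h != 0.
  apply/eqP => h0; have := hev vs; rewrite h0 meval0 /vs (negbTE ji) (negbTE ki) (negbTE li) eqxx.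
  rewrite /hfun; have [-> -> -> ->] := mob_id (x0 j) (x0 k) (x0 l).
  set D := ((x0 k - x0 l) * (x0 k - x0 j) * (x0 j - x0 l)).
  have hD : D != 0 by rewrite !mulf_neq0 // hd // eq_sym.
  move=> /esym /eqP; apply/negP; rewrite mulr0 subr0.
  apply: mulf_neq0; first apply: mulf_neq0; first by rewrite mulf_neq0.
    by apply/prodf_neq0 => m _; rewrite mul0r add0r.
  apply/prodf_neq0 => m hm; rewrite mul0r add0r addr0 (mulrC t0) -mulrBr mulf_neq0 //.
  by rewrite subr_eq0 ht0.
have hz : p * h = 0.
  apply: (mpoly_zero hC) => v; rewrite mevalM hev.
  case: (eqVneq (hfun x0 i (x0 j) (x0 k) (x0 l) (v j) (v k) (v l) (v i)) 0) => [->|hH].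
    by rewrite mulr0.
  move: hH; rewrite /hfun.
  set al := mAl _ _ _ _ _ _; set be := mBe _ _ _ _ _ _.
  set ga := mGa _ _ _ _ _ _; set de := mDe _ _ _ _ _ _.
  move=> hH.
  have hD : al * de - be * ga != 0.
    by apply: contraNneq hH => ->; rewrite !mul0r.
  have hden : forall m, ga * x0 m + de != 0.
    move=> m; apply: contraNneq hH => h0.
    by rewrite (bigD1 m) //= h0 mul0r mulr0 mul0r.
  have hti : forall m, m != i -> v i * (ga * x0 m + de) - (al * x0 m + be) != 0.
    move=> m hm; apply: contraNneq hH => h0.
    by rewrite [X in _ * X == 0](bigD1 m hm) /= h0 mul0r mulr0.
  have hy := mobius_fiber hG hs hrow hx0 hD hden hti.
  rewrite (meval_vars hp (y := fun m => if m == i then v i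
      else (al * x0 m + be) / (ga * x0 m + de))) ?(hvan _ hy) ?mul0r //.
  move=> m; rewrite !inE; case/orP => [/orP [/orP [] |] |] /eqP ->; rewrite ?eqxx //.
  - by rewrite (negbTE ji) /al /be /ga /de mob_j mulfK //; exact: hden.
  - by rewrite (negbTE ki) /al /be /ga /de mob_k mulfK //; exact: hden.
  - by rewrite (negbTE li) /al /be /ga /de mob_l mulfK //; exact: hden.
by move/eqP: hz; rewrite mulf_eq0 (negbTE hh0) orbF => /eqP.
Qed.


Lemma pick3 n (i : 'I_n) : (4 <= n)%N ->
  exists j k l : 'I_n, [/\ j != i, k != i, l != i & [/\ j != k, j != l & k != l]].
Proof.
move=> hn.
have h0 : (0 < n)%N by apply: leq_trans hn.
have h1 : (1 < n)%N by apply: leq_trans hn.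
have h2 : (2 < n)%N by apply: leq_trans hn.
have h3 : (3 < n)%N by [].
case: i => [[|[|[|m]]] hi].
- by exists (Ordinal h1), (Ordinal h2), (Ordinal h3); do !split; rewrite -val_eqE.
- by exists (Ordinal h0), (Ordinal h2), (Ordinal h3); do !split; rewrite -val_eqE.
- by exists (Ordinal h0), (Ordinal h1), (Ordinal h3); do !split; rewrite -val_eqE.
- by exists (Ordinal h0), (Ordinal h1), (Ordinal h2); do !split; rewrite -val_eqE.
Qed.

Lemma row_zero (C : fieldType) n (G : {set {set 'I_n}}) (s : 'M[C]_n) x0 i :
  simple_graph G -> in_KG G s -> fiber G s x0 -> (degree G i < 3)%N ->
  forall b, s i b = 0.
Proof.
move=> hG [hsym hoff hsum] [hdist hsc] hdeg b.
case: (boolP (b \in nbhd G i)) => hb; last by apply: hoff; rewrite inE in hb.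
move: hdeg; rewrite /degree; case E: #|nbhd G i| => [|[|[|]]] // _.
- by move: hb; rewrite (cards0_eq E) inE.
- have /cards1P [c Ec] : #|nbhd G i| == 1%N by rewrite E.
  have := hsum i; rewrite Ec big_set1 => hc.
  by move: hb; rewrite Ec inE => /eqP ->.
- have /cards2P [c [d [cd Ec]]] : #|nbhd G i| == 2%N by rewrite E.
  have hc : c \in nbhd G i by rewrite Ec !inE eqxx.
  have hd : d \in nbhd G i by rewrite Ec !inE eqxx orbT.
  have e1 : x0 i - x0 c != 0 by rewrite subr_eq0 hdist // eq_sym (nbhd_neq hG hc).
  have e2 : x0 i - x0 d != 0 by rewrite subr_eq0 hdist // eq_sym (nbhd_neq hG hd).
  have ecd : x0 c - x0 d != 0 by rewrite subr_eq0 hdist.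
  have hs1 := hsum i; have hs2 := hsc i.
  rewrite Ec big_setU1 ?inE //= big_set1 in hs1.
  rewrite Ec big_setU1 ?inE //= big_set1 in hs2.
  have sd : s i d = - s i c by apply/eqP; rewrite -addr_eq0 addrC hs1.
  have : s i c * (x0 c - x0 d) = 0.
    rewrite -[RHS](mul0r ((x0 i - x0 c) * (x0 i - x0 d))) -hs2 sd.
    by field; rewrite e1 e2.
  move/eqP; rewrite mulf_eq0 (negbTE ecd) orbF => /eqP sc0.
  by move: hb; rewrite Ec !inE => /orP [] /eqP ->; rewrite ?sd sc0 ?oppr0.
Qed.

Unset Implicit Arguments.
Local Close Scope ring_scope.

Theorem mainTheorem6 (C : closedFieldType) (hC : [pchar C]%R =i pred0)
    (n : nat) (hn : (4 <= n)%N) (G : {set {set 'I_n}}) (hG : simple_graph G) :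
  geometrically_copious C G -> forall i : 'I_n, (3 <= degree G i)%N.
Proof.
move=> [_ [q [[s0 [hs0 s0n0 qs0]] Hq]]] i.
have [[I0 [_ hI0]] hmax] := Hq s0 hs0 s0n0 qs0.
have [x0 hx0] : exists x0, fiber G s0 x0.
  apply: NNPP => hne.
  have h1 : (1%R : {mpoly C[n]}) = 0%R.
    apply: hI0.
      by move=> m; rewrite msupp1 inE => /eqP -> j _; rewrite mnm0E.
    by move=> x hx; exfalso; apply: hne; exists x.
  by move/eqP: h1; rewrite oner_eq0.
rewrite leqNgt; apply/negP => hdeg.
have hrow := row_zero hG hs0 hx0 hdeg.
have [j [k [l [ji ki li [jk jl kl]]]]] := pick3 i hn.
have := hmax _ (indep hC hG hs0 hrow hx0 ji ki li jk jl kl).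
have -> : [set i; j; k; l] = i |: (j |: (k |: [set l])).
  by apply/setP => x; rewrite !inE !orbA.
rewrite !cardsU1 cards1 !inE !negb_or.
rewrite eq_sym ji eq_sym ki eq_sym li jk jl kl.
by [].
Qed.
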